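(* Let $H=(\mathcal{V},\mathcal{I})$ be an interval hypergraph and let $\mathcal{P}=\{S_1,\dots,S_k\}$ be a partition of $\mathcal{I}$ such that each $S_i$ has an exact hitting set $h_i$. Let $R=\bigcup_{i=1}^k h_i$ and define $t:\mathcal{I}\to\mathcal{V}$ by letting $t(I)$ be the unique element of $I\cap h_i$, where $S_i$ is the part containing $I$. Let $G_{R,t}$ be the co-occurrence graph. If $Q=\{u_1,\dots,u_q\}$ is a clique of size $q$ in $G_{R,t}$, then there are $q$ distinct parts $s_1,\dots,s_q\in\mathcal{P}$ containing intervals $I_1,\dots,I_q$ respectively, such that for each $i$, $u_i=t(I_i)$, and for each edge $u_iu_j$ of $Q$, either $u_j\in I_i$ or $u_i\in I_j$.
   Context: An interval hypergraph has vertex set $[n]=\{1,\dots,n\}$ (ordered as points on a line) and hyperedges that are nonempty sets of consecutive integers. An exact hitting set of a family $S$ of hyperedges is a set $h\subseteq\mathcal{V}$ with $|h\cap I|=1$ for every $I\in S$. For a representative function $t$ (with $t(I)\in I$) and its image $R$, the co-occurrence graph $G_{R,t}$ has vertex set $R$, with distinct $u,v$ adjacent iff some $I\in\mathcal{I}$ has $u,v\in I$ and $t(I)\in\{u,v\}$. *)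

(* Defs.v *)
(* Vertices [n] = {1..n} are modelled by 'I_n = {0..n-1}
   with the order of nat (an order-isomorphic relabelling). *)
From mathcomp Require Import all_boot.
Set Implicit Arguments. Unset Strict Implicit. Unset Printing Implicit Defensive.

Definition is_interval (n : nat) (I : {set 'I_n}) : Prop :=
  I != set0 /\
  forall x y z : 'I_n, x \in I -> z \in I -> (x <= y)%N -> (y <= z)%N -> y \in I.

Definition exact_hitting_set (n : nat) (S : {set {set 'I_n}}) (h : {set 'I_n}) : Prop :=
  forall I, I \in S -> #|I :&: h| = 1%N.

(* Adjacency in the co-occurrence graph G_{R,t} (vertex set R = image of t):
   distinct u, v adjacent iff some hyperedge I contains both and t(I) \in {u, v}. *)
Definition cooc_adj (n : nat) (II : {set {set 'I_n}}) (t : {set 'I_n} -> 'I_n)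
  (u v : 'I_n) : Prop :=
  u <> v /\ exists I, [/\ I \in II, u \in I, v \in I & (t I = u \/ t I = v)].

(* Main.v *)
Require Import Defs.
From mathcomp Require Import all_boot.

Lemma choose_iv n (II : {set {set 'I_n}}) (t : {set 'I_n} -> 'I_n) q (u : 'I_q -> 'I_n) :
 (forall I, I \in II -> is_interval I) ->
 (forall I, I \in II -> t I \in I) ->
 injective u ->
 (forall i, exists2 I, I \in II & t I = u i) ->
 (forall i j, i != j -> cooc_adj II t (u i) (u j)) ->
 forall A : {set 'I_q}, exists Iv : 'I_q -> {set 'I_n},
   (forall i, i \in A -> Iv i \in II /\ t (Iv i) = u i) /\
   (forall i j, i \in A -> j \in A -> i != j -> u j \in Iv i \/ u i \in Iv j).
Proof.
move=> Hint HtI Hinj Him Hadj A.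
have [m] := ubnP #|A|; elim: m A => // m IH A /ltnSE hA.
have [A0|[i1 i1A]] := set_0Vmem A.
  by exists (fun _ => set0); split=> i; rewrite A0 in_set0.
have [i0 i0A i0min] : exists2 i0, i0 \in A & forall i, i \in A -> u i0 <= u i.
  by case: (arg_minnP (fun i => nat_of_ord (u i)) i1A) => i ? H; exists i.
pose C0 := [set j in A | [exists I in II, (t I == u i0) && (u j \in I)]].
have i0C0 : i0 \in C0.
  rewrite inE i0A /=; have [I II1 tI] := Him i0; apply/existsP; exists I.
  by rewrite II1 tI eqxx -tI HtI.
have [js jsC jsmax] : exists2 js, js \in C0 & forall j, j \in C0 -> u j <= u js.
  by case: (arg_maxnP (fun i => nat_of_ord (u i)) i0C0) => i ? H; exists i.
have [Is [IsII tIs ujsIs]] : exists I, [/\ I \in II, t I = u i0 & u js \in I].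
  move: jsC; rewrite inE => /andP[_ /existsP[I /andP[h1 /andP[/eqP h2 h3]]]].
  by exists I.
have ui0Is : u i0 \in Is by rewrite -tIs HtI.
have C0A : forall j, j \in C0 -> j \in A by move=> j; rewrite inE => /andP[].
have C0Is : forall j, j \in C0 -> u j \in Is.
  move=> j jC; apply: (proj2 (Hint _ IsII) (u i0) (u j) (u js)) => //.
    exact: i0min (C0A _ jC).
  exact: jsmax.
have notC0 : forall j, j \in A -> j \notin C0 -> forall I, I \in II -> t I = u i0 -> u j \notin I.
  move=> j jA jC I III tI; apply: contra jC => ujI.
  by rewrite inE jA; apply/existsP; exists I; rewrite III tI eqxx ujI.
pose C := C0 :\ i0.
have [Iv' [Iv'1 Iv'2]] : exists Iv' : 'I_q -> {set 'I_n},
   (forall i, i \in C -> Iv' i \in II /\ t (Iv' i) = u i) /\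
   (forall i j, i \in C -> j \in C -> i != j -> u j \in Iv' i \/ u i \in Iv' j).
  apply: IH; apply: leq_trans hA.
  rewrite (cardsD1 i0 A) i0A add1n ltnS; apply: subset_leq_card.
  by apply/subsetP => x; rewrite !inE => /andP[-> /andP[-> _]].
pose L j := odflt set0 [pick I in II | (t I == u j) && (u i0 \in I) && (u j \in I)].
have HL : forall j, j \in A -> j \notin C0 ->
   [/\ L j \in II, t (L j) = u j, u i0 \in L j & u j \in L j].
  move=> j jA jC; rewrite /L; case: pickP => [I /andP[III /andP[/andP[/eqP -> ->] ->]]|H] //.
  have jne : i0 != j by apply: contraNneq jC => <-.
  have [_ [I [III ui0I ujI tI]]] := Hadj _ _ jne.
  case: tI => tI.
    by have := notC0 _ jA jC _ III tI; rewrite ujI.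
  by have := H I; rewrite III tI eqxx ui0I ujI.
exists (fun i => if i == i0 then Is else if i \in C0 then Iv' i else L i).
split.
  move=> i iA; case: eqP => [->|/eqP ne]; first by [].
  case: ifP => iC; last by case: (HL i iA (negbT iC)).
  by apply: Iv'1; rewrite in_setD1 ne iC.
have key : forall i j, i \in A -> j \in A -> u i < u j ->
   u j \in (if i == i0 then Is else if i \in C0 then Iv' i else L i) \/
   u i \in (if j == i0 then Is else if j \in C0 then Iv' j else L j).
  move=> i j iA jA lt.
  have ji0 : (j == i0) = false.
    by apply/eqP => E; move: (i0min _ iA); rewrite -E leqNgt lt.
  rewrite ji0.
  have Lcov : j \notin C0 -> u i \in L j.
    move=> jC; have [LII _ ui0L ujL] := HL j jA jC.
    by apply: (proj2 (Hint _ LII) (u i0) (u i) (u j)) => //; [exact: i0min | exact: ltnW].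
  case: eqP => [ei|/eqP ne].
    case: ifP => jC; first by left; apply: C0Is.
    by right; apply: Lcov; rewrite jC.
  case: ifP => iC.
    case: ifP => jC; last by right; apply: Lcov; rewrite jC.
    apply: Iv'2; rewrite ?in_setD1 ?ne ?ji0 ?iC ?jC //.
    by apply/eqP => E; move: lt; rewrite E ltnn.
  case: ifP => jC; last by right; apply: Lcov; rewrite jC.
  exfalso; have := notC0 i iA (negbT iC) Is IsII tIs.
  have uiIs : u i \in Is.
    apply: (proj2 (Hint _ IsII) (u i0) (u i) (u j)) => //.
    - exact: C0Is.
    - exact: i0min.
    - exact: ltnW.
  by rewrite uiIs.
move=> i j iA jA ne.
case: (ltngtP (u i) (u j)) => [lt|lt|eq].
- exact: key.
- by case: (key j i jA iA lt) => H; [right|left].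
- by move: ne; rewrite (Hinj _ _ (val_inj eq)) eqxx.
Qed.

Theorem lemma7 (n : nat) (II : {set {set 'I_n}})
  (P : {set {set {set 'I_n}}}) (h : {set {set 'I_n}} -> {set 'I_n})
  (t : {set 'I_n} -> 'I_n) :
  (forall I, I \in II -> is_interval I) ->
  partition P II ->
  (forall S, S \in P -> exact_hitting_set S (h S)) ->
  (* t(I) is the unique element of I \cap h_i, where S_i is the part containing I *)
  (forall I, I \in II -> t I \in I :&: h (pblock P I)) ->
  forall (q : nat) (u : 'I_q -> 'I_n),
    injective u ->
    (forall i, u i \in [set t I | I in II]) ->
    (forall i j, i != j -> cooc_adj II t (u i) (u j)) ->
    exists (s : 'I_q -> {set {set 'I_n}}) (Iv : 'I_q -> {set 'I_n}),
      [/\ injective s,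
          (forall i, s i \in P /\ Iv i \in s i /\ u i = t (Iv i)) &
          (forall i j, i != j -> u j \in Iv i \/ u i \in Iv j)].
Proof.
move=> Hint Hpart Hhit Ht q u Hinj Him Hadj.
have HtI : forall I, I \in II -> t I \in I.
  by move=> I /Ht; rewrite inE => /andP[].
have HtH : forall I, I \in II -> t I \in h (pblock P I).
  by move=> I /Ht; rewrite inE => /andP[].
have Him' : forall i, exists2 I, I \in II & t I = u i.
  by move=> i; case/imsetP: (Him i) => I I1 ->; exists I.
have [Iv [H1 H2]] := @choose_iv n II t q u Hint HtI Hinj Him' Hadj setT.
have covP : cover P = II by case/and3P: Hpart => /eqP.
have IvII : forall i, Iv i \in II by move=> i; case: (H1 i (in_setT _)).
have tIv : forall i, t (Iv i) = u i by move=> i; case: (H1 i (in_setT _)).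
have H2' : forall i j, i != j -> u j \in Iv i \/ u i \in Iv j.
  by move=> i j; apply: H2; rewrite in_setT.
exists (fun i => pblock P (Iv i)), Iv; split.
- have gen : forall i j, pblock P (Iv i) = pblock P (Iv j) -> u j \in Iv i -> i = j.
    move=> i j E uj; apply: Hinj.
    have SP : pblock P (Iv i) \in P by apply: pblock_mem; rewrite covP.
    have IvS : Iv i \in pblock P (Iv i) by rewrite mem_pblock covP.
    have := Hhit _ SP _ IvS => /eqP/cards1P [x Ex].
    have a : u i \in Iv i :&: h (pblock P (Iv i)) by rewrite -tIv Ht.
    have b : u j \in Iv i :&: h (pblock P (Iv i)).
      by rewrite inE uj E -tIv HtH.
    by move: a b; rewrite Ex !inE => /eqP -> /eqP ->.
  move=> i j E; case: (boolP (i == j)) => [/eqP //|ne].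
  case: (H2' _ _ ne) => H; first exact: gen.
  by symmetry; apply: gen.
- move=> i; split; first by apply: pblock_mem; rewrite covP.
  by rewrite mem_pblock covP tIv.
- exact: H2'.
Qed.
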